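(* Let $\Omega=\{z\in\mathbb{C}:|z|=1\}$, $|\psi|<1$, and let $(Z_U,Z_V)$ have density $c(z_u,z_v)=\frac{1}{4\pi^2}\frac{1-|\psi|^2}{|1-\psi z_v\overline{z_u}|^2}$ on $\Omega\times\Omega$. Then for all $j,k\in\mathbb{Z}$, $$E(Z_U^jZ_V^k)=\begin{cases}\psi^j,& j=-k\ge0,\\ \overline{\psi}^{\,-j},& j=-k<0,\\ 0,&\text{otherwise.}\end{cases}$$
   Context: The density is with respect to arc-length measure on each circle; this distribution is denoted $BC_+(\psi)$. *)

(* Defs.v *)
From Stdlib Require Import Reals ZArith.
From Coquelicot Require Import Coquelicot.
Open Scope R_scope.

Definition Cpowz (z : C) (j : Z) : C :=
  match j with
  | Z0 => RtoC 1
  | Zpos p => Cpow z (Pos.to_nat p)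
  | Zneg p => Cpow (Cinv z) (Pos.to_nat p)
  end.

Definition circ (t : R) : C := (cos t, sin t).

(* density of BC_+(psi) with respect to arc-length on each circle *)
Definition bc_density (psi zu zv : C) : R :=
  / (4 * PI ^ 2) * ((1 - Cmod psi ^ 2) / (Cmod (RtoC 1 - psi * zv * Cconj zu)%C) ^ 2).

(* E(g(Z_U, Z_V)) for (Z_U,Z_V) ~ BC_+(psi): integral over Omega x Omega against
   arc-length x arc-length, Omega parametrized by t |-> e^{it}, t in [0, 2 pi]. *)
Definition bc_expect (psi : C) (g : C -> C -> C) : C :=
  @RInt C_R_CompleteNormedModule (fun t : R =>
    @RInt C_R_CompleteNormedModule
      (fun s : R => Cmult (RtoC (bc_density psi (circ t) (circ s))) (g (circ t) (circ s)))
      0 (2 * PI)) 0 (2 * PI).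

(* Main.v *)
Require Import Defs.
From Stdlib Require Import Reals ZArith Lra Lia.
From Coquelicot Require Import Coquelicot.
Open Scope R_scope.

Lemma normC (x : C) : @norm R_AbsRing C_R_NormedModule x = Cmod x.
Proof. rewrite Cmod_norm. reflexivity. Qed.

Lemma isC (f : R -> C) a b l1 l2 : is_RInt (fun t => fst (f t)) a b l1 -> is_RInt (fun t => snd (f t)) a b l2 -> @is_RInt C_R_NormedModule f a b (l1, l2).
Proof. intros; apply (is_RInt_fct_extend_pair (U:=R_NormedModule) (V:=R_NormedModule)); auto. Qed.

Lemma isC_fst (f : R -> C) a b l : @is_RInt C_R_NormedModule f a b l -> is_RInt (fun t => fst (f t)) a b (fst l).
Proof. intros; apply (is_RInt_fct_extend_fst (U:=R_NormedModule) (V:=R_NormedModule)); auto. Qed.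
Lemma isC_snd (f : R -> C) a b l : @is_RInt C_R_NormedModule f a b l -> is_RInt (fun t => snd (f t)) a b (snd l).
Proof. intros; apply (is_RInt_fct_extend_snd (U:=R_NormedModule) (V:=R_NormedModule)); auto. Qed.

Lemma is_RInt_Cmul (c : C) (f : R -> C) a b l : @is_RInt C_R_NormedModule f a b l ->
  @is_RInt C_R_NormedModule (fun t => (c * f t)%C) a b (c * l)%C.
Proof.
  intros H. pose proof (isC_fst _ _ _ _ H) as H1. pose proof (isC_snd _ _ _ _ H) as H2.
  destruct c as [cr ci]. destruct l as [l1 l2]. simpl in *.
  apply isC; simpl.
  - apply (is_RInt_minus (V:=R_NormedModule)); apply (is_RInt_scal (V:=R_NormedModule)); assumption.
  - apply (is_RInt_plus (V:=R_NormedModule)); apply (is_RInt_scal (V:=R_NormedModule)); assumption.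
Qed.

Lemma is_RInt_Cconj (f : R -> C) a b l : @is_RInt C_R_NormedModule f a b l ->
  @is_RInt C_R_NormedModule (fun t => Cconj (f t)) a b (Cconj l).
Proof.
  intros H. pose proof (isC_fst _ _ _ _ H) as H1. pose proof (isC_snd _ _ _ _ H) as H2.
  destruct l as [l1 l2]. apply isC; simpl in *; auto.
  apply (is_RInt_opp (V:=R_NormedModule)); assumption.
Qed.
Lemma sin_2PIm (m : Z) : sin (IZR m * (2 * PI)) = 0.
Proof. apply sin_eq_0_1. exists (2 * m)%Z. rewrite mult_IZR. ring. Qed.
Lemma cos_2PIm (m : Z) : cos (IZR m * (2 * PI)) = 1.
Proof.
  replace (IZR m * (2 * PI)) with (2 * (IZR m * PI)) by ring.
  rewrite cos_2a_sin. rewrite (sin_eq_0_1 (IZR m * PI)). ring. exists m; ring.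
Qed.

Lemma int_cos (m : Z) : m <> 0%Z -> is_RInt (fun s => cos (IZR m * s)) 0 (2 * PI) 0.
Proof.
  intros Hm. assert (Hm' : IZR m <> 0) by (apply not_0_IZR; auto).
  assert (H := is_RInt_derive (V:=R_CompleteNormedModule) (fun s => sin (IZR m * s) / IZR m) (fun s => cos (IZR m * s)) 0 (2 * PI)).
  cbv beta in H. match type of H with _ -> _ -> is_RInt _ _ _ ?v => replace v with 0 in H end.
  - apply H; cbv beta.
    + intros x _. auto_derive; auto. field; auto.
    + intros x _. apply (ex_derive_continuous (K:=R_AbsRing) (V:=R_NormedModule)). auto_derive; auto.
  - rewrite Rmult_0_r, sin_0, sin_2PIm. unfold minus, plus, opp; simpl. field. auto.
Qed.

Lemma int_sin (m : Z) : m <> 0%Z -> is_RInt (fun s => sin (IZR m * s)) 0 (2 * PI) 0.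
Proof.
  intros Hm. assert (Hm' : IZR m <> 0) by (apply not_0_IZR; auto).
  assert (H := is_RInt_derive (V:=R_CompleteNormedModule) (fun s => - cos (IZR m * s) / IZR m) (fun s => sin (IZR m * s)) 0 (2 * PI)).
  cbv beta in H. match type of H with _ -> _ -> is_RInt _ _ _ ?v => replace v with 0 in H end.
  - apply H; cbv beta.
    + intros x _. auto_derive; auto. field; auto.
    + intros x _. apply (ex_derive_continuous (K:=R_AbsRing) (V:=R_NormedModule)). auto_derive; auto.
  - rewrite Rmult_0_r, cos_0, cos_2PIm. unfold minus, plus, opp; simpl. field. auto.
Qed.

Lemma int_circ (m : Z) : @is_RInt C_R_NormedModule (fun s => circ (IZR m * s)) 0 (2 * PI)
  (if Z.eqb m 0 then RtoC (2 * PI) else RtoC 0).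
Proof.
  destruct (Z.eqb_spec m 0) as [->|Hm].
  - unfold RtoC. apply isC; simpl.
    + apply (is_RInt_ext (V:=R_NormedModule) (fun _ => 1)).
      { intros. rewrite Rmult_0_l, cos_0. reflexivity. }
      replace (2 * PI) with (scal (2 * PI - 0) 1) at 2.
      apply (is_RInt_const (V:=R_NormedModule)).
      unfold scal; simpl; unfold mult; simpl; ring.
    + apply (is_RInt_ext (V:=R_NormedModule) (fun _ => 0)).
      { intros. rewrite Rmult_0_l, sin_0. reflexivity. }
      assert (H := is_RInt_const (V:=R_NormedModule) 0 (2 * PI) 0).
      unfold scal in H; simpl in H; unfold mult in H; simpl in H. rewrite Rmult_0_r in H. exact H.
  - unfold RtoC. apply isC; simpl.
    + apply int_cos; auto.
    + apply int_sin; auto.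
Qed.

Lemma Cmod_circ x : Cmod (circ x) = 1.
Proof. unfold Cmod, circ; cbn [fst snd].
  replace (cos x ^ 2 + sin x ^ 2) with 1. apply sqrt_1.
  rewrite <- (sin2_cos2 x). unfold Rsqr. ring. Qed.

Definition hh (c : C) (m : Z) (s : R) : C := (circ (IZR m * s) / (1 - c * circ s))%C.

Lemma u_lb c s : Cmod c < 1 -> 1 - Cmod c <= Cmod (1 - c * circ s)%C.
Proof.
  intros Hc. assert (H := Cmod_triangle (1 - c * circ s) (c * circ s)).
  replace (1 - c * circ s + c * circ s)%C with (RtoC 1) in H by ring.
  rewrite Cmod_1, Cmod_mult, Cmod_circ in H. lra.
Qed.

Lemma u_ne0 c s : Cmod c < 1 -> (1 - c * circ s)%C <> 0%C.
Proof.
  intros Hc E. assert (H := u_lb c s Hc). rewrite E, Cmod_0 in H. lra.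
Qed.

Lemma ex_hh c m : Cmod c < 1 -> @ex_RInt C_R_NormedModule (hh c m) 0 (2 * PI).
Proof.
  intros Hc. destruct c as [cr ci].
  assert (Hd : forall s, (1 - (cr * cos s - ci * sin s)) ^ 2 + (- (cr * sin s + ci * cos s)) ^ 2 <> 0).
  { intros s Z. apply (u_ne0 (cr, ci) s Hc). apply Cmod_eq_0. unfold Cmod. simpl.
    simpl in Z. transitivity (sqrt 0); [f_equal | apply sqrt_0]. eapply eq_trans; [|exact Z]; ring. }
  assert (E1 : ex_RInt (fun s => fst (hh (cr, ci) m s)) 0 (2 * PI)).
  { apply (ex_RInt_continuous (V:=R_CompleteNormedModule)). intros z _.
    apply (ex_derive_continuous (K:=R_AbsRing) (V:=R_NormedModule)).
    unfold hh, circ, Cdiv, Cminus, Cmult, Cinv, Cplus, Copp, RtoC; simpl.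
    auto_derive. repeat split; try (intro Z; apply (Hd z); eapply eq_trans; [|exact Z]; ring). }
  assert (E2 : ex_RInt (fun s => snd (hh (cr, ci) m s)) 0 (2 * PI)).
  { apply (ex_RInt_continuous (V:=R_CompleteNormedModule)). intros z _.
    apply (ex_derive_continuous (K:=R_AbsRing) (V:=R_NormedModule)).
    unfold hh, circ, Cdiv, Cminus, Cmult, Cinv, Cplus, Copp, RtoC; simpl.
    auto_derive. repeat split; try (intro Z; apply (Hd z); eapply eq_trans; [|exact Z]; ring). }
  destruct E1 as [l1 H1], E2 as [l2 H2]. exists (l1, l2). apply isC; auto.
Qed.

Definition FF (c : C) (m : Z) : C := @RInt C_R_CompleteNormedModule (hh c m) 0 (2 * PI).

Lemma is_FF c m : Cmod c < 1 -> @is_RInt C_R_NormedModule (hh c m) 0 (2 * PI) (FF c m).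
Proof. intros Hc. apply (RInt_correct (V:=C_R_CompleteNormedModule)). apply ex_hh; auto. Qed.

Lemma circ_add x y : circ (x + y) = (circ x * circ y)%C.
Proof. unfold circ, Cmult. simpl. rewrite cos_plus, sin_plus. f_equal; ring. Qed.

Lemma minusC (a b : C) : @minus C_R_NormedModule a b = (a - b)%C.
Proof. reflexivity. Qed.

Lemma FF_rec c m : Cmod c < 1 ->
  FF c m = (c * FF c (m + 1) + (if Z.eqb m 0 then RtoC (2 * PI) else RtoC 0))%C.
Proof.
  intros Hc.
  assert (H1 := is_RInt_minus (V:=C_R_NormedModule) _ _ _ _ _ _ (is_FF c m Hc) (is_RInt_Cmul c _ _ _ _ (is_FF c (m+1) Hc))).
  assert (H2 : @is_RInt C_R_NormedModule (fun s => circ (IZR m * s)) 0 (2 * PI) (minus (FF c m) (c * FF c (m + 1))%C)).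
  { eapply is_RInt_ext; [|exact H1]. intros x _. cbv beta.
    unfold hh. rewrite plus_IZR, Rmult_plus_distr_r, Rmult_1_l, circ_add.
    assert (U := u_ne0 c x Hc). rewrite minusC. change (@eq C ((circ (IZR m * x) / (1 - c * circ x)) - c * (circ (IZR m * x) * circ x / (1 - c * circ x)))%C (circ (IZR m * x))). field. auto. }
  assert (E1 := is_RInt_unique (V:=C_R_CompleteNormedModule) _ _ _ _ H2).
  assert (E2 := is_RInt_unique (V:=C_R_CompleteNormedModule) _ _ _ _ (int_circ m)).
  rewrite E1 in E2. change (minus ?a ?b) with (Cminus a b) in E2.
  transitivity ((FF c m - c * FF c (m + 1)) + c * FF c (m + 1))%C. ring. rewrite E2. apply Cplus_comm.
Qed.

Lemma FF_bound c m : Cmod c < 1 -> Cmod (FF c m) <= 2 * PI * / (1 - Cmod c).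
Proof.
  intros Hc. rewrite <- normC.
  replace (2 * PI) with (2 * PI - 0) by ring.
  apply (norm_RInt_le_const (V:=C_R_NormedModule) (hh c m)); [pose proof PI_RGT_0; lra | | apply is_FF; auto].
  intros x _. rewrite normC. unfold hh, Cdiv. rewrite Cmod_mult, Cmod_circ, Cmod_inv by (apply u_ne0; auto).
  rewrite Rmult_1_l. apply Rinv_le_contravar. lra. apply u_lb; auto.
Qed.

Lemma geom_zero (x : C) r B : 0 <= r < 1 -> 0 <= B -> (forall n, Cmod x <= r ^ n * B) -> x = 0%C.
Proof.
  intros Hr HB H. apply Cmod_eq_0. destruct (Rle_lt_or_eq_dec 0 (Cmod x) (Cmod_ge_0 x)) as [Hp|]; auto.
  exfalso. destruct (pow_lt_1_zero r ltac:(rewrite Rabs_pos_eq; lra) (Cmod x / (B + 1))) as [N HN].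
  { apply Rdiv_lt_0_compat; lra. }
  specialize (HN N (le_n _)). rewrite Rabs_pos_eq in HN by (apply pow_le; lra).
  specialize (H N). apply (Rmult_lt_compat_r (B + 1)) in HN; [|lra].
  unfold Rdiv in HN. rewrite Rmult_assoc, Rinv_l, Rmult_1_r in HN by lra.
  assert (0 <= r ^ N) by (apply pow_le; lra). nra.
Qed.

Lemma FF_iter c m n : Cmod c < 1 -> (0 < m)%Z -> FF c m = (c ^ n * FF c (m + Z.of_nat n))%C.
Proof.
  intros Hc Hm. induction n as [|n IH].
  - simpl. rewrite Z.add_0_r. ring.
  - rewrite IH, (FF_rec c (m + Z.of_nat n)) by auto.
    replace (m + Z.of_nat n =? 0)%Z with false by (symmetry; apply Z.eqb_neq; lia).
    replace (m + Z.of_nat n + 1)%Z with (m + Z.of_nat (S n))%Z by lia. simpl. ring.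
Qed.

Lemma FF_pos c m : Cmod c < 1 -> (0 < m)%Z -> FF c m = 0%C.
Proof.
  intros Hc Hm. apply (geom_zero _ (Cmod c) (2 * PI * / (1 - Cmod c))).
  - split; [apply Cmod_ge_0|auto].
  - assert (0 < 2 * PI * / (1 - Cmod c)); [|lra].
    apply Rmult_lt_0_compat; [pose proof PI_RGT_0; lra | apply Rinv_0_lt_compat; lra].
  - intros n. rewrite (FF_iter c m n Hc Hm), Cmod_mult, Cmod_pow.
    apply Rmult_le_compat_l; [apply pow_le, Cmod_ge_0 | apply FF_bound; auto].
Qed.

Lemma FF_nonpos c n : Cmod c < 1 -> FF c (- Z.of_nat n) = (c ^ n * RtoC (2 * PI))%C.
Proof.
  intros Hc. induction n as [|n IH].
  - change (- Z.of_nat 0)%Z with 0%Z. rewrite (FF_rec c 0) by auto. rewrite (FF_pos c (0 + 1)) by (auto; lia). simpl. ring.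
  - rewrite (FF_rec c) by auto.
    replace (- Z.of_nat (S n) =? 0)%Z with false by (symmetry; apply Z.eqb_neq; lia).
    replace (- Z.of_nat (S n) + 1)%Z with (- Z.of_nat n)%Z by lia. rewrite IH. simpl. ring.
Qed.

Lemma circ0 : circ 0 = RtoC 1.
Proof. unfold circ, RtoC. rewrite cos_0, sin_0. reflexivity. Qed.

Lemma Cpow_circ n t : Cpow (circ t) n = circ (INR n * t).
Proof.
  induction n as [|n IH].
  - simpl. rewrite Rmult_0_l, circ0. reflexivity.
  - simpl Cpow. rewrite IH, S_INR, <- circ_add. f_equal. ring.
Qed.

Lemma Cinv_circ t : Cinv (circ t) = circ (- t).
Proof.
  unfold Cinv, circ; cbn [fst snd]. rewrite cos_neg, sin_neg.
  replace (cos t ^ 2 + sin t ^ 2) with 1 by (rewrite <- (sin2_cos2 t); unfold Rsqr; ring).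
  f_equal; field.
Qed.

Lemma Cconj_circ t : Cconj (circ t) = circ (- t).
Proof. unfold Cconj, circ; cbn [fst snd]. rewrite cos_neg, sin_neg. reflexivity. Qed.

Lemma Cpowz_circ t j : Cpowz (circ t) j = circ (IZR j * t).
Proof.
  destruct j as [|p|p]; simpl Cpowz.
  - rewrite Rmult_0_l, circ0. reflexivity.
  - rewrite Cpow_circ, INR_IZR_INZ, positive_nat_Z. reflexivity.
  - rewrite Cinv_circ, Cpow_circ, INR_IZR_INZ, positive_nat_Z.
    f_equal. rewrite <- Pos2Z.opp_pos, opp_IZR. ring.
Qed.

Lemma poisson (a : C) : Cmod a < 1 ->
  RtoC ((1 - Cmod a ^ 2) / Cmod (RtoC 1 - a)%C ^ 2) = (/ (1 - a) + Cconj (/ (1 - a)) - 1)%C.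
Proof.
  intros Ha. assert (U : (1 - a)%C <> 0%C).
  { intros E. assert (a = RtoC 1). { transitivity (a + (1 - a))%C. rewrite E. ring. ring. }
    subst. rewrite Cmod_1 in Ha. lra. }
  assert (Hd : (1 - fst a) ^ 2 + snd a ^ 2 <> 0).
  { intros Z. apply U. apply Cmod_eq_0. unfold Cmod, Cminus, Cplus, Copp, RtoC; cbn [fst snd].
    transitivity (sqrt 0); [|apply sqrt_0]. f_equal.
    eapply eq_trans; [|exact Z]. ring. }
  rewrite !Cmod2_alt. destruct a as [x y]. simpl Re in *; simpl Im in *. simpl fst in Hd; simpl snd in Hd.
  unfold RtoC, Cinv, Cconj, Cminus, Cplus, Copp; cbn [fst snd].
  f_equal; field; (intro Z; apply Hd; eapply eq_trans; [|exact Z]; ring).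
Qed.

Lemma integrand_eq psi t s j k : Cmod psi < 1 ->
  (RtoC (bc_density psi (circ t) (circ s)) * (Cpowz (circ t) j * Cpowz (circ s) k))%C =
  ((RtoC (/ (4 * PI ^ 2)) * circ (IZR j * t)) *
   (hh (psi * circ (- t)) k s + Cconj (hh (psi * circ (- t)) (- k) s) - circ (IZR k * s)))%C.
Proof.
  intros Hp. set (c := (psi * circ (- t))%C).
  assert (E1 : (psi * circ s * Cconj (circ t))%C = (c * circ s)%C).
  { unfold c. rewrite Cconj_circ. ring. }
  assert (E2 : Cmod psi = Cmod (c * circ s)%C).
  { unfold c. rewrite !Cmod_mult, !Cmod_circ. ring. }
  unfold bc_density. rewrite E1, E2, RtoC_mult, poisson by (rewrite <- E2; auto).
  rewrite !Cpowz_circ. unfold hh, Cdiv. rewrite Cmult_conj, Cconj_circ, opp_IZR.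
  replace (- (- IZR k * s)) with (IZR k * s) by ring. ring.
Qed.

Lemma Cmod_c psi t : Cmod (psi * circ (- t))%C = Cmod psi.
Proof. rewrite Cmod_mult, Cmod_circ. ring. Qed.

Lemma inner psi t j k : Cmod psi < 1 ->
  @RInt C_R_CompleteNormedModule
    (fun s => (RtoC (bc_density psi (circ t) (circ s)) * (Cpowz (circ t) j * Cpowz (circ s) k))%C) 0 (2 * PI) =
  ((RtoC (/ (4 * PI ^ 2)) * circ (IZR j * t)) *
   (FF (psi * circ (- t)) k + Cconj (FF (psi * circ (- t)) (- k)) - (if Z.eqb k 0 then RtoC (2 * PI) else RtoC 0)))%C.
Proof.
  intros Hp. set (c := (psi * circ (- t))%C).
  assert (Hc : Cmod c < 1) by (unfold c; rewrite Cmod_c; auto).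
  assert (H := is_RInt_Cmul (RtoC (/ (4 * PI ^ 2)) * circ (IZR j * t)) _ _ _ _
    (is_RInt_minus (V:=C_R_NormedModule) _ _ _ _ _ _
      (is_RInt_plus (V:=C_R_NormedModule) _ _ _ _ _ _ (is_FF c k Hc) (is_RInt_Cconj _ _ _ _ (is_FF c (- k) Hc)))
      (int_circ k))).
  apply (is_RInt_unique (V:=C_R_CompleteNormedModule)).
  eapply is_RInt_ext; [|exact H]. intros x _. cbv beta. rewrite integrand_eq by auto. reflexivity.
Qed.

Definition WW (psi : C) (k : Z) : C :=
  if Z.leb k 0 then Cpow psi (Z.to_nat (- k)) else Cpow (Cconj psi) (Z.to_nat k).

Lemma IZR_pos p : IZR (Zpos p) = INR (Pos.to_nat p).
Proof. rewrite INR_IZR_INZ, positive_nat_Z. reflexivity. Qed.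

Lemma inner_val psi t j k : Cmod psi < 1 ->
  ((RtoC (/ (4 * PI ^ 2)) * circ (IZR j * t)) *
   (FF (psi * circ (- t)) k + Cconj (FF (psi * circ (- t)) (- k)) - (if Z.eqb k 0 then RtoC (2 * PI) else RtoC 0)))%C
  = (RtoC (/ (2 * PI)) * WW psi k * circ (IZR (j + k) * t))%C.
Proof.
  intros Hp. set (c := (psi * circ (- t))%C).
  assert (Hc : Cmod c < 1) by (unfold c; rewrite Cmod_c; auto).
  assert (KR : (RtoC (/ (4 * PI ^ 2)) * RtoC (2 * PI))%C = RtoC (/ (2 * PI))).
  { rewrite <- RtoC_mult. f_equal. pose proof PI_RGT_0. field. lra. }
  rewrite plus_IZR, Rmult_plus_distr_r, circ_add.
  destruct k as [|p|p].
  - assert (F0 : FF c 0 = (c ^ 0 * RtoC (2 * PI))%C) by exact (FF_nonpos c 0 Hc).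
    simpl Z.opp. rewrite F0. unfold WW. simpl Z.leb. cbv iota. simpl Z.to_nat. simpl Cpow. simpl Z.eqb; cbv iota.
    rewrite Rmult_0_l, circ0.
    replace (Cconj (1 * RtoC (2*PI))%C) with (RtoC (2*PI)) by (unfold RtoC, Cconj, Cmult; simpl; f_equal; ring).
    transitivity ((RtoC (/ (4 * PI ^ 2)) * RtoC (2 * PI)) * circ (IZR j * t))%C. ring. rewrite KR. destruct (0 <=? 0)%Z; ring.
  - assert (F1 := FF_nonpos c (Pos.to_nat p) Hc). rewrite positive_nat_Z in F1.
    change (- Z.pos p)%Z with (Z.neg p) in *. rewrite F1, FF_pos by (auto; lia). unfold WW.
    replace (Z.pos p <=? 0)%Z with false by reflexivity. replace (Z.pos p =? 0)%Z with false by reflexivity.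
    change (Z.to_nat (Z.pos p)) with (Pos.to_nat p).
    rewrite Cmult_conj, Cpow_conj. unfold c. rewrite Cmult_conj, Cpow_mult_l, Cconj_circ, Cpow_circ, Ropp_involutive.
    replace (Cconj (RtoC (2 * PI))) with (RtoC (2 * PI)) by (unfold RtoC, Cconj; simpl; f_equal; ring).
    transitivity ((RtoC (/ (4 * PI ^ 2)) * RtoC (2 * PI)) * (Cconj psi ^ Pos.to_nat p) * circ (IZR j * t) * circ (INR (Pos.to_nat p) * t))%C.
    + ring.
    + rewrite KR, (IZR_pos p). ring.
  - assert (F1 := FF_nonpos c (Pos.to_nat p) Hc). rewrite positive_nat_Z in F1.
    change (- Z.pos p)%Z with (Z.neg p) in F1. change (- Z.neg p)%Z with (Z.pos p).
    rewrite F1, (FF_pos c (Zpos p)) by (auto; lia). unfold WW.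
    replace (Z.neg p <=? 0)%Z with true by reflexivity. replace (Z.neg p =? 0)%Z with false by reflexivity.
    change (Z.to_nat (- Z.neg p)) with (Pos.to_nat p).
    unfold c. rewrite Cpow_mult_l, Cpow_circ.
    replace (IZR (Zneg p)) with (- INR (Pos.to_nat p)) by (rewrite <- IZR_pos; reflexivity).
    replace (INR (Pos.to_nat p) * - t) with (- INR (Pos.to_nat p) * t) by ring.
    replace (Cconj 0) with (RtoC 0) by (unfold RtoC, Cconj; simpl; f_equal; ring).
    transitivity ((RtoC (/ (4 * PI ^ 2)) * RtoC (2 * PI)) * (psi ^ Pos.to_nat p) * circ (IZR j * t) * circ (- INR (Pos.to_nat p) * t))%C.
    + ring.
    + rewrite KR. ring.
Qed.

Theorem mainTheorem8 (psi : C) (hpsi : Cmod psi < 1) (j k : Z) :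
  bc_expect psi (fun zu zv => (Cpowz zu j * Cpowz zv k)%C) =
  if Z.eqb j (- k) then
    (if Z.leb 0 j then Cpowz psi j else Cpowz (Cconj psi) (- j))
  else RtoC 0.
Proof.
  unfold bc_expect. cbv beta.
  rewrite (RInt_ext (V:=C_R_CompleteNormedModule) _ (fun t => (RtoC (/ (2 * PI)) * WW psi k * circ (IZR (j + k) * t))%C)).
  2:{ intros t _. rewrite inner by auto. apply inner_val; auto. }
  rewrite (is_RInt_unique (V:=C_R_CompleteNormedModule) _ _ _ _ (is_RInt_Cmul (RtoC (/ (2 * PI)) * WW psi k) _ _ _ _ (int_circ (j + k)))).
  destruct (Z.eqb_spec j (- k)) as [Ej|Ej].
  - subst j. replace (- k + k =? 0)%Z with true by (symmetry; apply Z.eqb_eq; lia).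
    transitivity (WW psi k * (RtoC (/ (2 * PI)) * RtoC (2 * PI)))%C. ring.
    rewrite <- RtoC_mult, Rinv_l by (pose proof PI_RGT_0; lra).
    unfold WW. destruct k as [|p|p]; simpl; ring.
  - replace (j + k =? 0)%Z with false by (symmetry; apply Z.eqb_neq; lia).
    ring.
Qed.
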